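(* Let $(W,S)$ be a finite Coxeter system, let $J\subseteq S$, and let $W_J$ be the standard parabolic subgroup generated by $J$, with Poincaré polynomial $P_{W_J}(q)=\sum_{x\in W_J}q^{\ell(x)}$; let $P_W(q)=\sum_{w\in W}q^{\ell(w)}$. For $w\in W$ let $g_w(q)=\sum_{\chi\in\operatorname{Irr}(W)}\chi(w)d_\chi(q)$, and for $x\in W_J$ let $g_{W_J,x}(q)=\sum_{\varphi\in\operatorname{Irr}(W_J)}\varphi(x)d_\varphi(q)$, where $d_\chi$ and $d_\varphi$ are the generic degrees of $W$ and of $W_J$ respectively. If $w\in W$ is conjugate in $W$ to $x\in W_J$, then $$g_w(q)=\frac{P_W(q)}{P_{W_J}(q)}\,g_{W_J,x}(q).$$
   Context: For a finite Coxeter group $W$ with set of distinguished generators $S$, length function $\ell(\cdot)$, identity $e$, and set of irreducible complex characters $\operatorname{Irr}(W)$: let $K\subseteq\mathbb{C}$ be a splitting field for $W$, $q$ an indeterminate, and $\mathcal{H}$ the Hecke algebra of $W$ over $K(\sqrt q)$ with basis $T_w$ ($w\in W$) and relations $T_s^2=qT_e+(q-1)T_s$ for $s\in S$, and $T_xT_y=T_{xy}$ whenever $\ell(x)+\ell(y)=\ell(xy)$. $\mathcal{H}$ is split semisimple; each irreducible character $\tilde\chi$ of $\mathcal{H}$ satisfies $\tilde\chi(T_w)\in K[\sqrt q]$, and specializing $\sqrt q\mapsto 1$ in $\tilde\chi(T_w)$ gives $\chi(w)$ for a unique $\chi\in\operatorname{Irr}(W)$, giving a bijection $\chi\leftrightarrow\tilde\chi$.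 The generic degrees $d_\chi(q)$, $\chi\in\operatorname{Irr}(W)$, are the unique elements satisfying $\sum_{\chi\in\operatorname{Irr}(W)}\tilde\chi(T_w)d_\chi(q)=P(q)$ if $w=e$ and $=0$ if $w\neq e$, where $P(q)=\sum_{w\in W}q^{\ell(w)}$. The generic degrees of $W_J$ are defined in the same way for the Coxeter system $(W_J,J)$. *)

(* Defs.v *)
From HB Require Import structures.
From mathcomp Require Import all_boot all_order all_algebra all_fingroup all_solvable all_field all_character.
From mathcomp Require Import fraction.

Set Implicit Arguments. Unset Strict Implicit. Unset Printing Implicit Defensive.
Import Order.TTheory GRing.Theory Num.Theory.
Local Open Scope ring_scope.

(* The field K(sqrt q), with K taken to be algC and v := sqrt q the indeterminate 'X. *)
Definition HF : fieldType := {fraction {poly algC}}.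
Definition cstF (c : algC) : HF := tofrac (c%:P).
Definition qF : HF := tofrac ('X ^+ 2 : {poly algC}).

Section Coxeter.
Variable gT : finGroupType.

(* (W,S) is a Coxeter system: W = <<S>>, elements of S are involutions, and W has the
   Coxeter presentation < S | (st)^{m(s,t)} = 1 > with m(s,t) = order of st
   (universal property: every assignment of S into a monoid satisfying the relations
   extends to a homomorphism on W). *)
Definition coxeter_system (W : {group gT}) (S : {set gT}) : Prop :=
  [/\ W :=: <<S>>%g, (forall s, s \in S -> #[s]%g = 2%N) &
   forall (H : Type) (mul : H -> H -> H) (one : H),
     associative mul -> left_id one mul -> right_id one mul ->
     forall f : gT -> H,
       (forall s t, s \in S -> t \in S ->
          iter #[(s * t)%g]%g (mul (mul (f s) (f t))) one = one) ->
       exists phi : gT -> H,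
         (forall s, s \in S -> phi s = f s) /\
         {in W &, forall x y, phi (x * y)%g = mul (phi x) (phi y)}].

Definition word_of (S : {set gT}) (w : gT) (n : nat) : bool :=
  [exists t : n.-tuple gT, all (fun s => s \in S) t && ((\prod_(s <- t) s)%g == w)].

(* length function: the least n with a word of length n in S representing w
   (a shortest word has length < #|gT|) *)
Definition coxeter_length (S : {set gT}) (w : gT) : nat :=
  find (word_of S w) (iota 0 #|gT|).

Definition poincare (W : {group gT}) (S : {set gT}) : HF :=
  \sum_(w in W) qF ^+ coxeter_length S w.

(* a matrix representation of the Hecke algebra H(W,S) over K(sqrt q), given on the basis T_w *)
Definition hecke_rep (W : {group gT}) (S : {set gT}) n (rho : gT -> 'M[HF]_n) : Prop :=
  [/\ rho 1%g = 1%:M,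
      (forall s, s \in S -> rho s *m rho s = qF *: 1%:M + (qF - 1) *: rho s) &
      {in W &, forall x y, (coxeter_length S x + coxeter_length S y)%N
                           = coxeter_length S (x * y)%g ->
                           rho (x * y)%g = rho x *m rho y}].

Definition hecke_irr (W : {group gT}) (S : {set gT}) n (rho : gT -> 'M[HF]_n) : Prop :=
  [/\ hecke_rep W S rho, (0 < n)%N &
      forall U : 'M[HF]_n, {in W, forall w, (U *m rho w <= U)%MS} ->
                           (U == (0 : 'M[HF]_n))%MS || row_full U].

(* the character of rho (the irreducible character tilde chi) corresponds to chi:
   tilde chi(T_w) lies in K[sqrt q] and specializes to chi(w) at sqrt q = 1 *)
Definition hecke_affords (W : {group gT}) n (rho : gT -> 'M[HF]_n) (chi : 'CF(W)) : Prop :=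
  forall w, w \in W -> exists p : {poly algC}, \tr (rho w) = tofrac p /\ p.[1] = chi w.

Definition is_generic_degrees (W : {group gT}) (S : {set gT})
    (rk : Iirr W -> nat) (rho : forall i : Iirr W, gT -> 'M[HF]_(rk i))
    (d : Iirr W -> HF) : Prop :=
  forall w, w \in W ->
    \sum_(i : Iirr W) \tr (rho i w) * d i = if w == 1%g then poincare W S else 0.

Definition gpoly (W : {group gT}) (d : Iirr W -> HF) (w : gT) : HF :=
  \sum_(i : Iirr W) cstF ('chi[W]_i w) * d i.

End Coxeter.

Arguments hecke_affords [gT] W [n] rho chi.
Arguments is_generic_degrees [gT] W S [rk] rho d.
Arguments gpoly [gT] W d w.

(* Main.v *)
Require Import Defs.
From HB Require Import structures.
From mathcomp Require Import all_boot all_order all_algebra all_fingroup all_solvable all_field all_character.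
From mathcomp Require Import fraction.
From mathcomp Require Import zify.
From Stdlib Require Import FunctionalExtensionality Classical.
Import Order.TTheory GRing.Theory Num.Theory.
Local Open Scope ring_scope.
Set Implicit Arguments. Unset Strict Implicit. Unset Printing Implicit Defensive.
Section Comb.
Variable gT : finGroupType.
Implicit Types (S J : {set gT}) (x y : gT) (s : seq gT).
Local Open Scope group_scope.

Definition wprod (s : seq gT) : gT := \prod_(a <- s) a.

Lemma wprod_cat s1 s2 : wprod (s1 ++ s2) = wprod s1 * wprod s2.
Proof. by rewrite /wprod big_cat. Qed.
Lemma wprod_cons a s : wprod (a :: s) = a * wprod s.
Proof. by rewrite /wprod big_cons. Qed.
Lemma wprod_nil : wprod [::] = 1. Proof. by rewrite /wprod big_nil. Qed.
Lemma wprod_rcons s a : wprod (rcons s a) = wprod s * a.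
Proof. by rewrite -cats1 wprod_cat wprod_cons wprod_nil mulg1. Qed.

Lemma word_ofP S x n :
  reflect (exists s, [/\ size s = n, all (fun a => a \in S) s & wprod s = x])
          (word_of S x n).
Proof.
apply: (iffP existsP) => [[t /andP[Ht /eqP Hx]] | [s [Hn Hs Hx]]].
  by exists (val t); rewrite size_tuple.
have Hsz : size s == n by rewrite Hn.
by exists (Tuple Hsz); rewrite /= Hs /=; apply/eqP.
Qed.

Lemma shorten_word S s : all (fun a => a \in S) s ->
  exists s', [/\ (size s' < #|gT|)%N, all (fun a => a \in S) s' & wprod s' = wprod s].
Proof.
have [n Hn] := ubnP (size s); elim: n s Hn => // n IH s Hsn Hs.
case: (ltnP (size s) #|gT|) => [lt|ge]; first by exists s.
pose pp := [seq wprod (take i s) | i <- iota 0 (size s).+1].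
have : ~~ uniq pp.
  apply/negP => U; move: (card_uniqP U) (max_card (mem pp)).
  by rewrite size_map size_iota => ->; rewrite ltnNge ge.
case/(uniqPn 1) => i [j [Hij Hj]].
rewrite size_map size_iota ltnS in Hj.
have Hi' : (i < (size s).+1)%N by apply: leq_trans Hij _; apply: ltnW.
rewrite !(nth_map 0%N) ?size_iota ?ltnS // !nth_iota ?ltnS // !add0n => Heq.
have Hi : (i < size s)%N by apply: leq_trans Hij Hj.
pose s' := take i s ++ drop j s.
have Hs' : all (fun a => a \in S) s'.
  apply/allP => a; rewrite mem_cat => /orP[/mem_take|/mem_drop] Ha; exact: (allP Hs).
have Hsz : (size s' < n)%N.
  rewrite size_cat size_take Hi size_drop.
  lia.
have [s'' [H1 H2 H3]] := IH s' Hsz Hs'.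
exists s''; split=> //; by rewrite H3 /s' wprod_cat Heq -wprod_cat cat_take_drop.
Qed.

Definition inS S s := all (fun a => a \in S) s.

Lemma len_le S x s : inS S s -> wprod s = x -> (coxeter_length S x <= size s)%N.
Proof.
move=> Hs Hx; rewrite /coxeter_length.
case: (ltnP (size s) #|gT|) => [lt|ge].
  rewrite leqNgt; apply/negP => Hlt.
  have := before_find 0%N Hlt; rewrite nth_iota // add0n.
  have -> // : word_of S x (size s) by apply/word_ofP; exists s.
by apply: leq_trans (find_size _ _) _; rewrite size_iota.
Qed.

Lemma len_word S x : x \in <<S>> ->
  exists s, [/\ size s = coxeter_length S x, inS S s & wprod s = x].
Proof.
case/gen_prodgP=> n [c Hc ->].
pose s0 := [seq c i | i <- index_enum 'I_n].
have Hs0 : inS S s0 by apply/allP=> a /mapP[i _ ->].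
have Hp0 : wprod s0 = \prod_i c i by rewrite /wprod big_map.
have [s1 [Hsz Hs1 Hp1]] := shorten_word Hs0.
have Hh : has (word_of S (\prod_i c i)) (iota 0 #|gT|).
  apply/hasP; exists (size s1); first by rewrite mem_iota.
  by apply/word_ofP; exists s1; rewrite Hp1.
have := nth_find 0%N Hh; move: Hh; rewrite has_find size_iota => Hh.
rewrite nth_iota // add0n => /word_ofP[s [H1 H2 H3]].
by exists s.
Qed.

Lemma len1 S : coxeter_length S 1 = 0%N.
Proof. by apply/eqP; rewrite -leqn0 (@len_le S 1 [::]) // wprod_nil. Qed.

Lemma len_eq0 S x : x \in <<S>> -> coxeter_length S x = 0%N -> x = 1.
Proof.
case/len_word=> s [Hsz _ Hx] H0; rewrite -Hx; move: Hsz; rewrite H0.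
by case: s {Hx} => // _; rewrite wprod_nil.
Qed.

Lemma inv_invol (a : gT) : #[a] = 2%N -> a * a = 1.
Proof. by move=> H; have := expg_order a; rewrite H expgS expg1. Qed.

Lemma invol_inv (a : gT) : #[a] = 2%N -> a^-1 = a.
Proof. by move=> H; rewrite -[a^-1]mulg1 -(inv_invol H) mulKg. Qed.

Lemma len_gen S a : a \in S -> #[a] = 2%N -> coxeter_length S a = 1%N.
Proof.
move=> Ha H2; apply/eqP; rewrite eqn_leq (@len_le S a [:: a]) ?wprod_cons ?wprod_nil ?mulg1 //=; last by rewrite Ha.
rewrite lt0n; apply/eqP => H0.
have := len_eq0 (mem_gen Ha) H0; move=> Ha1; rewrite Ha1 order1 in H2; by [].
Qed.

Definition invols S := forall a, a \in S -> #[a] = 2%N.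

Lemma wprod_rev S s : invols S -> inS S s -> wprod (rev s) = (wprod s)^-1.
Proof.
move=> HS; elim: s => [|a s IH] /=; first by rewrite wprod_nil invg1.
case/andP=> Ha Hs; rewrite rev_cons wprod_rcons IH // wprod_cons invMg.
by rewrite (invol_inv (HS a Ha)).
Qed.

Lemma wprod_in S s : inS S s -> wprod s \in <<S>>.
Proof.
rewrite /inS; elim: s => [|a s IH] /=; first by rewrite wprod_nil group1.
by case/andP=> Ha Hs; rewrite wprod_cons; apply: groupM; [apply: mem_gen | apply: IH].
Qed.

Lemma inS_rev S s : inS S (rev s) = inS S s.
Proof. by rewrite /inS all_rev. Qed.

Lemma len_inv S x : invols S -> x \in <<S>> -> coxeter_length S x^-1 = coxeter_length S x.
Proof.
move=> HS Hx; have [s [H1 H2 H3]] := len_word Hx.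
have Hx' : x^-1 \in <<S>> by rewrite groupV.
have [s' [H1' H2' H3']] := len_word Hx'.
apply/eqP; rewrite eqn_leq.
rewrite -{1}H1 -size_rev (len_le (s := rev s)) ?inS_rev ?(wprod_rev HS) ?H3 //=.
by rewrite -H1' -size_rev (len_le (s := rev s')) ?inS_rev ?(wprod_rev HS) ?H3' ?invgK.
Qed.

Lemma len_mulr_le S x a : x \in <<S>> -> a \in S ->
  (coxeter_length S (x * a) <= (coxeter_length S x).+1)%N.
Proof.
move=> Hx Ha; have [s [H1 H2 H3]] := len_word Hx.
rewrite -H1 -(size_rcons s a); apply: len_le; last by rewrite wprod_rcons H3.
by rewrite /inS all_rcons Ha.
Qed.

Section Cox.
Variables (W : {group gT}) (S : {set gT}).
Hypothesis HW : coxeter_system W S.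

Lemma cox_gen : W :=: <<S>>. Proof. by case: HW. Qed.
Lemma cox_invol : invols S. Proof. by case: HW. Qed.

Lemma sign_ex : exists eps : gT -> int,
  (forall a, a \in S -> eps a = -1)%R /\ {in W &, forall x y, eps (x * y) = (eps x * eps y)%R}.
Proof.
case: HW => _ _ U.
have [|phi [H1 H2]] := U int (fun a b => a * b)%R 1%R (@mulrA _) (@mul1r _) (@mulr1 _) (fun _ => -1)%R.
  move=> a b _ _ /=; rewrite mulrNN mulr1; elim: (#[a * b]) => //= k ->; by rewrite mul1r.
by exists phi.
Qed.

Lemma len_mulr J x a : J \subset S -> x \in <<J>> -> a \in J ->
  coxeter_length J (x * a) = (coxeter_length J x).+1 \/
  coxeter_length J x = (coxeter_length J (x * a)).+1.
Proof.
move=> HJ Hx Ha.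
have HaS : a \in S by apply: (subsetP HJ).
have HJW : <<J>> \subset W by rewrite cox_gen genS.
have [eps [E1 E2]] := sign_ex.
have Ee1 : eps 1 = 1%R.
  have := E2 a 1 (subsetP HJW _ (mem_gen Ha)) (group1 _).
  by rewrite mulg1 E1 // mulN1r => /eqP; rewrite eqr_opp => /eqP <-.
have Ew : forall s, inS J s -> eps (wprod s) = ((-1) ^+ size s)%R.
  rewrite /inS; elim=> [|b s IH] /=; first by rewrite wprod_nil Ee1.
  case/andP=> Hb Hs.
  have HbW : b \in W := subsetP HJW _ (mem_gen Hb).
  have HsW : wprod s \in W := subsetP HJW _ (wprod_in Hs).
  by rewrite wprod_cons E2 // IH // E1 ?(subsetP HJ) // exprS.
have El : forall y, y \in <<J>> -> eps y = ((-1) ^+ coxeter_length J y)%R.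
  move=> y /len_word [s0 [H1 H2 H3]]; rewrite -H1 -{1}H3; exact: Ew.
have Hxa : x * a \in <<J>> by apply: groupM => //; apply: mem_gen.
have := E2 x a (subsetP HJW _ Hx) (subsetP HJW _ (mem_gen Ha)).
rewrite El // El // E1 // -signr_odd -(signr_odd _ (coxeter_length J x)) => Hsg.
have Hne : coxeter_length J (x * a) <> coxeter_length J x.
  move=> E; move: Hsg; rewrite E.
  by case: (odd _); rewrite ?expr1 ?expr0 ?mulr1 ?mul1r ?mulN1r ?opprK => /eqP.
have Hinv := cox_invol (subsetP HJ _ Ha).
have L1 := len_mulr_le Hx Ha.
have L2 := len_mulr_le Hxa Ha.
rewrite -mulgA (inv_invol Hinv) mulg1 in L2.
lia.
Qed.



Definition piR (a : gT) (z : gT * bool) : gT * bool := (z.1 ^ a^-1, z.2 (+) (z.1 == a)).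

Lemma conjV_eq (r y z : gT) : (r ^ y^-1 == z) = (r == z ^ y).
Proof. by apply/eqP/eqP => [<-|->]; rewrite ?conjgKV ?conjgK. Qed.

Lemma comm_pow (a b : gT) k : b * (a * b) ^+ k = (b * a) ^+ k * b.
Proof.
elim: k => [|k IH]; first by rewrite !expg0 mul1g mulg1.
by rewrite expgSr mulgA IH -!mulgA expgSr -!mulgA.
Qed.

Lemma iter_pi (a b : gT) k r c : a \in S -> b \in S ->
  iter k (fun g => fun z => piR a (piR b (g z))) id (r, c) =
  (r ^ ((a * b) ^+ k)^-1, c (+) odd (count_mem r [seq (b * a) ^+ j * b | j <- iota 0 k.*2])).
Proof.
move=> Ha Hb; have Ia := invol_inv (cox_invol Ha); have Ib := invol_inv (cox_invol Hb).
have Iab : (a * b)^-1 = b * a by rewrite invMg Ia Ib.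
elim: k => [|k IH]; first by rewrite /= expg0 invg1 conjg1 addbF.
have Hi : iota 0 (k.+1).*2 = iota 0 k.*2 ++ [:: k.*2; k.*2.+1].
  by rewrite doubleS -addn2 iotaD.
rewrite iterS Hi; cbv beta; rewrite IH /piR /=.
have E1 : (r ^ ((a * b) ^+ k)^-1 == b) = ((b * a) ^+ k.*2 * b == r).
  rewrite conjV_eq eq_sym; congr (_ == _).
  by rewrite conjgE -expgVn Iab comm_pow mulgA -expgD addnn.
have E2 : ((r ^ ((a * b) ^+ k)^-1) ^ b^-1 == a) = ((b * a) ^+ (k.*2.+1) * b == r).
  rewrite conjV_eq conjV_eq eq_sym; congr (_ == _).
  rewrite !conjgE Ib -expgVn Iab.
  by rewrite (mulgA b a b) -(mulgA (b * a) b) comm_pow mulgA -expgSr mulgA -expgD addSn addnn.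
rewrite E1 E2 map_cat count_cat /= [(a * b) ^+ k.+1]expgS !invMg !conjgM oddD addn0 !oddD !oddb.
by rewrite -!addbA.
Qed.


Lemma pi_rel (a b : gT) : a \in S -> b \in S ->
  iter #[a * b] (fun g => fun z => piR a (piR b (g z))) id = id.
Proof.
move=> Ha Hb; apply: functional_extensionality => -[r c].
rewrite iter_pi // expg_order invg1 conjg1.
have Ia := invol_inv (cox_invol Ha); have Ib := invol_inv (cox_invol Hb).
have Iab : (a * b)^-1 = b * a by rewrite invMg Ia Ib.
set m := #[a * b].
have Hm : (b * a) ^+ m = 1 by rewrite -Iab expgVn expg_order invg1.
rewrite -addnn iotaD add0n -{2}[m]addn0 iotaDl map_cat.
have -> : [seq (b * a) ^+ j * b | j <- [seq (m + i)%N | i <- iota 0 m]] =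
          [seq (b * a) ^+ j * b | j <- iota 0 m].
  by rewrite -map_comp; apply: eq_map => j /=; rewrite expgD Hm mul1g.
by rewrite count_cat oddD addbb addbF.
Qed.

Lemma refl_hom : exists phi : gT -> (gT * bool -> gT * bool),
  (forall a, a \in S -> phi a = piR a) /\
  {in W &, forall x y, phi (x * y) = (fun z => phi x (phi y z))}.
Proof.
case: HW => _ _ U.
have [|phi [H1 H2]] := U (gT * bool -> gT * bool) (fun f g => fun z => f (g z)) id
   (fun f g h => erefl) (fun f => erefl) (fun f => erefl) piR.
  by move=> a b Ha Hb; apply: pi_rel.
by exists phi.
Qed.

Fixpoint Tseq (s : seq gT) : seq gT :=
  if s is a :: s' then (a ^ wprod s') :: Tseq s' else [::].

Lemma size_Tseq s : size (Tseq s) = size s.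
Proof. by elim: s => //= a s ->. Qed.

Lemma memT s r : r \in Tseq s ->
  exists L c R, s = L ++ c :: R /\ r = c ^ wprod R.
Proof.
elim: s => //= a s IH; rewrite inE => /orP[/eqP ->|/IH [L [c [R [E1 E2]]]]].
  by exists [::], a, s.
by exists (a :: L), c, R; rewrite E1.
Qed.

Section PhiWord.
Variable phi : gT -> (gT * bool -> gT * bool).
Hypothesis P1 : forall a, a \in S -> phi a = piR a.
Hypothesis P2 : {in W &, forall x y, phi (x * y) = (fun z => phi x (phi y z))}.
Variable a0 : gT.
Hypothesis Ha0 : a0 \in S.

Lemma phi_word s : inS S s -> forall r c,
  phi (wprod s) (r, c) = (r ^ (wprod s)^-1, c (+) odd (count_mem r (Tseq s))).
Proof.
have HaW : a0 \in W by rewrite cox_gen mem_gen.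
have Hid : phi 1 = id.
  have Ia := inv_invol (cox_invol Ha0).
  rewrite -Ia P2 //; apply: functional_extensionality => -[r c].
  rewrite P1 // /piR /= conjV_eq [a0 ^ a0]conjgE mulKg -addbA addbb addbF.
  by rewrite -conjgM -invMg Ia invg1 conjg1.
rewrite /inS; elim: s => [|a s IH] /=.
  by move=> _ r c; rewrite wprod_nil Hid invg1 conjg1 addbF.
case/andP=> Ha Hs r c.
have HaW' : a \in W by rewrite cox_gen mem_gen.
have HsW : wprod s \in W by rewrite cox_gen wprod_in.
rewrite wprod_cons P2 // IH // P1 // /piR /= invMg conjgM conjV_eq oddD oddb.
rewrite [a ^ _ == r]eq_sym; by case: (r == _); case: (odd _); case: c.
Qed.

Lemma N_le s : inS S s -> (#|[set r | (phi (wprod s) (r, false)).2]| <= size s)%N.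
Proof.
move=> Hs; rewrite -(size_Tseq s); apply: leq_trans (card_size (Tseq s)).
rewrite -cardsE; apply: subset_leq_card; apply/subsetP => r.
rewrite !inE phi_word //= => Hodd; apply/negPn/negP => /count_memPn H.
by rewrite H in Hodd.
Qed.

Lemma N_ge s : inS S s -> uniq (Tseq s) ->
  (size s <= #|[set r | (phi (wprod s) (r, false)).2]|)%N.
Proof.
move=> Hs U; rewrite -(size_Tseq s) -(card_uniqP U) -cardsE.
apply: subset_leq_card; apply/subsetP => r; rewrite !inE => Hr.
by rewrite phi_word //= count_uniq_mem // Hr.
Qed.

End PhiWord.
End Cox.

Lemma delete_T J s : invols J -> inS J s -> ~~ uniq (Tseq s) ->
  exists s', [/\ inS J s', (size s').+2 = size s & wprod s' = wprod s].
Proof.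
move=> HJ; rewrite /inS; elim: s => [|a s IH] //=.
case/andP=> Ha Hs; rewrite negb_and negbK => /orP[Hin | Hnu]; last first.
  have [s' [A B C]] := IH Hs Hnu.
  by exists (a :: s'); rewrite /= Ha A B wprod_cons C wprod_cons.
have [L [c [R [E1 E2]]]] := memT Hin.
move: Hs E2; rewrite E1 => Hs; rewrite wprod_cat wprod_cons mulgA conjgM.
move=> /conjg_inj; rewrite conjgE => H.
have Hc : c \in J by move: Hs; rewrite all_cat /= => /and3P[_ ->].
have H' : a * (wprod L * c) = wprod L.
  by rewrite -[LHS](mulKVg (wprod L * c)) H -mulgA (inv_invol (HJ c Hc)) mulg1.
exists (L ++ R); split.
- by move: Hs; rewrite /inS !all_cat /= => /and3P[-> _ ->].
- by rewrite !size_cat /= addnS.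
- by rewrite !wprod_cons !wprod_cat wprod_cons mulgA mulgA -(mulgA a) H'.
Qed.

Lemma len_sub (W : {group gT}) S J x : coxeter_system W S -> J \subset S -> x \in <<J>> ->
  coxeter_length S x = coxeter_length J x.
Proof.
move=> HW HJ Hx.
have HJS : forall s, inS J s -> inS S s.
  by move=> s; apply: sub_all => a; apply: (subsetP HJ).
have [sJ [H1 H2 H3]] := len_word Hx.
apply/eqP; rewrite eqn_leq; apply/andP; split.
  by rewrite -H1 (len_le (HJS _ H2) H3).
case: (set_0Vmem J) => [J0 | [a0 Ha0]].
  by move: Hx; rewrite J0 gen0 inE => /eqP ->; rewrite len1.
have Ha0S : a0 \in S by apply: (subsetP HJ).
have Hx' : x \in <<S>> := subsetP (genS HJ) _ Hx.
have [sS [K1 K2 K3]] := len_word Hx'.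
have [phi [P1 P2]] := refl_hom HW.
have HinvJ : invols J := fun a Ha => cox_invol HW (subsetP HJ a Ha).
have Hu : uniq (Tseq sJ).
  case Hu: (uniq (Tseq sJ)) => //.
  have [s' [A B C]] := delete_T HinvJ H2 (negbT Hu).
  have := len_le A (etrans C H3); rewrite -H1 -B => Hle; exfalso; lia.
have := N_ge HW P1 P2 Ha0S (HJS _ H2) Hu; rewrite H1 H3 => Hge.
apply: leq_trans Hge _; rewrite -K1 -{1}K3.
have HH := N_le HW P1 P2 Ha0S K2. exact HH.
Qed.
End Comb.

Lemma casimir_step (R : fieldType) r m (Ra : 'M[R]_r) (Sa : 'M[R]_m) (B : 'M[R]_(r,m)) (q u w : R) :
  Ra *m Ra = q *: 1%:M + (q - 1) *: Ra -> Sa *m Sa = q *: 1%:M + (q - 1) *: Sa -> w * q = u ->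
  Ra *m (u *: B + w *: (Ra *m B *m Sa)) = (u *: B + w *: (Ra *m B *m Sa)) *m Sa.
Proof.
move=> HR HS Hw.
rewrite mulmxDr mulmxDl -!scalemxAr -!scalemxAl !mulmxA HR.
rewrite -[Ra *m B *m Sa *m Sa]mulmxA HS.
rewrite !(mulmxDl, mulmxDr) -!scalemxAl -!scalemxAr !mul1mx !mulmx1 !scalerDr !scalerA Hw ?mulmxA.
by rewrite addrCA.
Qed.

Section SubFact.
Variables (F : fieldType) (n : nat) (U : 'M[F]_n).

Lemma in_submod_mul m (W : 'M[F]_(m, n)) (B : 'M[F]_n) : (W <= U)%MS ->
  in_submod U (W *m B) = in_submod U W *m in_submod U (val_submod 1%:M *m B).
Proof.
move=> sWU; rewrite mulmxA; congr (in_submod U _).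
by rewrite mulmxA -val_submodE in_submodK.
Qed.

Lemma val_submod_mul m (V : 'M[F]_(m, \rank U)) (B : 'M[F]_n) : (U *m B <= U)%MS ->
  val_submod (V *m in_submod U (val_submod 1%:M *m B)) = val_submod V *m B.
Proof.
move=> HB; rewrite 2!(mulmxA V) -val_submodE in_submodK //.
exact: submx_trans (submxMr _ (val_submodP _)) HB.
Qed.

Lemma in_factmod_mul m (W : 'M[F]_(m, n)) (B : 'M[F]_n) : (U *m B <= U)%MS ->
  in_factmod U (W *m B) = in_factmod U W *m in_factmod U (val_factmod 1%:M *m B).
Proof.
move=> HB; rewrite -{1}[W](add_sub_fact_mod U) mulmxDl linearD /=.
apply: (canLR (subrK _)); apply: etrans (_ : 0 = _).
  apply/eqP; rewrite in_factmod_eq0 (submx_trans _ HB) //.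
  by rewrite submxMr ?val_submodP.
by rewrite /in_factmod /val_factmod /= !mulmxA mulmx1 ?subrr.
Qed.

Lemma tr_sub_fact (B : 'M[F]_n) :
  \tr (in_submod U (val_submod 1%:M *m B)) + \tr (in_factmod U (val_factmod 1%:M *m B)) = \tr B.
Proof.
rewrite -[in_submod U _]mulmxA mxtrace_mulC -val_submodE addrC.
rewrite -[in_factmod U _]mulmxA mxtrace_mulC -val_factmodE addrC.
by rewrite -mxtraceD add_sub_fact_mod.
Qed.

End SubFact.

Section Hecke.
Variable gT : finGroupType.
Variable J : {set gT}.
Hypothesis HinvJ : invols J.
Hypothesis Hdich : forall x a, x \in <<J>>%g -> a \in J ->
  coxeter_length J (x * a)%g = (coxeter_length J x).+1 \/
  coxeter_length J x = (coxeter_length J (x * a)%g).+1.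

Local Notation ell := (coxeter_length J).

Definition hrep n (sg : gT -> 'M[HF]_n) := hecke_rep <<J>>%G J sg.
Definition irrH n (sg : gT -> 'M[HF]_n) := forall U : 'M_n,
  {in <<J>>%G, forall w, (U *m sg w <= U)%MS} -> (U == (0 : 'M[HF]_n))%MS || row_full U.

Lemma ell_gen a : a \in J -> ell a = 1%N.
Proof. by move=> Ha; apply: len_gen Ha (HinvJ Ha). Qed.

Lemma inJ_G0 a : a \in J -> a \in <<J>>%G.
Proof. exact: mem_gen. Qed.

Lemma last_letter x : x \in <<J>>%g -> x <> 1%g ->
  exists2 a, a \in J & ell x = (ell (x * a)%g).+1.
Proof.
move=> Hx Hx1; have [s [H1 H2 H3]] := len_word Hx.
case/lastP: s H1 H2 H3 => [|s a] H1 H2 H3.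
  by move: H3; rewrite wprod_nil => /esym.
move: H2; rewrite /inS all_rcons => /andP[Ha Hs].
exists a => //.
have Hxa : (ell (x * a)%g <= size s)%N.
  apply: len_le Hs _; rewrite -H3 wprod_rcons -mulgA (inv_invol (HinvJ Ha)) mulg1 //.
case: (Hdich Hx Ha) => // E; move: Hxa; rewrite E -H1 size_rcons => H; exfalso; lia.
Qed.

Section Rep.
Variables (n : nat) (sg : gT -> 'M[HF]_n).
Hypothesis Hsg : hrep sg.

Lemma hrep1 : sg 1%g = 1%:M. Proof. by case: Hsg. Qed.
Lemma hquad a : a \in J -> sg a *m sg a = qF *: 1%:M + (qF - 1) *: sg a.
Proof. by case: Hsg => _ H _; apply: H. Qed.
Lemma hrel_r x a : x \in <<J>>%g -> a \in J -> ell (x * a)%g = (ell x).+1 ->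
  sg (x * a)%g = sg x *m sg a.
Proof.
move=> Hx Ha E; case: Hsg => _ _ H; apply: H => //; first exact: inJ_G0.
by rewrite (ell_gen Ha) addn1 E.
Qed.
Lemma hrel_l x a : x \in <<J>>%g -> a \in J -> ell (a * x)%g = (ell x).+1 ->
  sg (a * x)%g = sg a *m sg x.
Proof.
move=> Hx Ha E; case: Hsg => _ _ H; apply: H => //; first exact: inJ_G0.
by rewrite (ell_gen Ha) add1n E.
Qed.
End Rep.

Lemma neq_n2 k : (k == k.+2)%N = false.
Proof. by elim: k. Qed.

Lemma qF_neq0 : qF != 0.
Proof. by rewrite /qF tofrac_eq0 expf_neq0 // polyX_eq0. Qed.

Definition Phi r m (rh : gT -> 'M[HF]_r) (sg : gT -> 'M[HF]_m) (A : 'M[HF]_(r,m)) : 'M[HF]_(r,m) :=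
  \sum_(x in <<J>>%G) (qF ^+ ell x)^-1 *: (rh (x^-1)%g *m A *m sg x).

Lemma ell_inv x : x \in <<J>>%g -> ell (x^-1)%g = ell x.
Proof. by move=> Hx; apply: len_inv. Qed.

Lemma Phi_gen r m rh sg A a : @hrep r rh -> @hrep m sg -> a \in J ->
  rh a *m Phi rh sg A = Phi rh sg A *m sg a.
Proof.
move=> Hr Hs Ha.
have HaG := inJ_G0 Ha.
have Ia := invol_inv (HinvJ Ha).
pose P x := ell (x * a)%g == (ell x).+1.
pose F x := (qF ^+ ell x)^-1 *: (rh (x^-1)%g *m A *m sg x).
rewrite /Phi -/F (bigID P) /=.
have -> : \sum_(x in <<J>>%G | ~~ P x) F x = \sum_(x in <<J>>%G | P x) F (x * a)%g.
  rewrite (reindex_inj (mulIg a)) /=; apply: eq_bigl => x.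
  rewrite groupMr //; case Hx: (x \in <<J>>%G) => //=.
  rewrite /P -mulgA (inv_invol (HinvJ Ha)) mulg1.
  by case: (Hdich Hx Ha) => ->; rewrite eqxx neq_n2.
rewrite -big_split /= mulmx_sumr mulmx_suml; apply: eq_bigr => x /andP[Hx /eqP Px].
have Hxi : (x^-1)%g \in <<J>>%g by rewrite groupV.
have E1 : rh ((x * a)^-1)%g = rh a *m rh (x^-1)%g.
  rewrite invMg Ia hrel_l // -Ia -invMg ell_inv ?Px ?ell_inv //.
  by rewrite groupM.
have E2 : sg (x * a)%g = sg x *m sg a by rewrite hrel_r.
rewrite /F E1 E2 Px.
have -> : rh a *m rh (x^-1)%g *m A *m (sg x *m sg a) = rh a *m (rh (x^-1)%g *m A *m sg x) *m sg a.
  by rewrite !mulmxA.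
apply: casimir_step; try exact: hquad.
by rewrite exprS invfM mulrAC mulVf ?mul1r // qF_neq0.
Qed.

Lemma Phi_all r m rh sg A : @hrep r rh -> @hrep m sg ->
  forall y, y \in <<J>>%g -> rh y *m Phi rh sg A = Phi rh sg A *m sg y.
Proof.
move=> Hr Hs y; have [k Hk] := ubnP (ell y); elim: k y Hk => // k IH y Hk Hy.
case: (y =P 1%g) => [->|Hy1]; first by rewrite !hrep1 // mul1mx mulmx1.
have [a Ha E] := last_letter Hy Hy1.
have Hy' : (y * a)%g \in <<J>>%g by rewrite groupM // inJ_G0.
have Ey : y = (y * a * a)%g by rewrite -mulgA (inv_invol (HinvJ Ha)) mulg1.
have Ey' : ell (y * a * a)%g = (ell (y * a)%g).+1 by rewrite -Ey.
rewrite Ey (hrel_r Hr Hy' Ha Ey') (hrel_r Hs Hy' Ha Ey').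
rewrite -mulmxA Phi_gen // !mulmxA IH //; move: Hk; rewrite E; by [].
Qed.

Lemma delta_mid p r m k (A : 'M[HF]_(p, r)) (B : 'M[HF]_(m, k)) i j u l :
  (A *m delta_mx i j *m B) u l = A u i * B j l.
Proof.
rewrite -(mul_delta_mx (0 : 'I_1)) mulmxA -colE -mulmxA.
have -> : delta_mx 0 j *m B = row j B by rewrite rowE.
by rewrite mxE big_ord1 !mxE.
Qed.

Lemma schur_tr r m (rh : gT -> 'M[HF]_r) (sg : gT -> 'M[HF]_m) (M : 'M[HF]_(r,m)) :
  irrH rh -> irrH sg -> (forall y, y \in <<J>>%g -> rh y *m M = M *m sg y) -> M != 0 ->
  forall y, y \in <<J>>%g -> \tr (sg y) = \tr (rh y).
Proof.
move=> Ir Is Hc HM0.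
have Hfree : row_free M.
  rewrite -kermx_eq0.
  have [|/andP[H _]|Hfull] := orP (Ir (kermx M) _).
  - move=> w Hw; apply/sub_kermxP; rewrite -mulmxA Hc // mulmxA mulmx_ker mul0mx //.
  - by rewrite -submx0.
  have := sub_kermxP (submx_full 1%:M Hfull); rewrite mul1mx => HM.
  by rewrite HM eqxx in HM0.
have Hfull : row_full M.
  have [|/andP[H _]|H] := orP (Is <<M>>%MS _).
  - by move=> w Hw; rewrite (eqmxMr _ (genmxE M)) genmxE -Hc // submxMl.
  - by rewrite genmxE submx0 in H; rewrite H in HM0.
  by move: H; rewrite /row_full genmxE.
have MP : M *m pinvmx M = 1%:M by apply: mulmxVp.
have PM : pinvmx M *m M = 1%:M.
  by have := mulmxKpV (submx_full 1%:M Hfull); rewrite mul1mx.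
move=> y Hy; rewrite -[sg y]mul1mx -PM -mulmxA -Hc // mxtrace_mulC -mulmxA MP mulmx1 //.
Qed.

Section SubRep.
Variables (n : nat) (sg : gT -> 'M[HF]_n) (U : 'M[HF]_n).
Hypothesis Hsg : hrep sg.
Hypothesis HU : forall y, y \in <<J>>%g -> (U *m sg y <= U)%MS.

Definition subrep := fun y => in_submod U (@val_submod _ _ U _ 1%:M *m sg y).
Definition factrep := fun y => in_factmod U (@val_factmod _ _ U _ 1%:M *m sg y).

Lemma subrep_mul y z : y \in <<J>>%g ->
  subrep y *m subrep z = in_submod U (@val_submod _ _ U _ 1%:M *m (sg y *m sg z)).
Proof.
move=> Hy; rewrite /subrep mulmxA; symmetry; rewrite in_submod_mul //.
exact: submx_trans (submxMr _ (val_submodP _)) (HU Hy).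
Qed.

Lemma factrep_mul y z : z \in <<J>>%g ->
  factrep y *m factrep z = in_factmod U (@val_factmod _ _ U _ 1%:M *m (sg y *m sg z)).
Proof. by move=> Hz; rewrite /factrep mulmxA; symmetry; rewrite in_factmod_mul // HU. Qed.

Lemma subrep_hrep : hrep subrep.
Proof.
split.
- by rewrite /subrep hrep1 // mulmx1 val_submodK.
- move=> a Ha; rewrite subrep_mul ?inJ_G0 // hquad // mulmxDr -!scalemxAr mulmx1.
  by rewrite linearD !linearZ /= val_submodK.
- move=> x y Hx Hy E; rewrite subrep_mul //.
  by case: Hsg => _ _ H; rewrite /subrep H.
Qed.

Lemma factrep_hrep : hrep factrep.
Proof.
split.
- by rewrite /factrep hrep1 // mulmx1 val_factmodK.
- move=> a Ha; rewrite factrep_mul ?inJ_G0 // hquad // mulmxDr -!scalemxAr mulmx1.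
  by rewrite linearD !linearZ /= val_factmodK.
- move=> x y Hx Hy E; rewrite factrep_mul //.
  by case: Hsg => _ _ H; rewrite /factrep H.
Qed.

Lemma tr_subfact y : \tr (sg y) = \tr (subrep y) + \tr (factrep y).
Proof. by rewrite tr_sub_fact. Qed.

End SubRep.

Section Family.
Variables (rkJ : Iirr <<J>>%G -> nat) (rhoJ : forall j, gT -> 'M[HF]_(rkJ j)).
Hypothesis HrJ : forall j, hrep (rhoJ j).
Hypothesis IrJ : forall j, irrH (rhoJ j).
Variable dJ : Iirr <<J>>%G -> HF.
Hypothesis HdJ : is_generic_degrees <<J>>%G J rhoJ dJ.
Hypothesis PJ0 : poincare <<J>>%G J != 0.

Lemma complete m (ps : gT -> 'M[HF]_m) : hrep ps -> irrH ps -> (0 < m)%N ->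
  exists j, forall y, y \in <<J>>%g -> \tr (ps y) = \tr (rhoJ j y).
Proof.
move=> Hp Ip Hm.
apply: NNPP => Hno.
have H0 : forall j A, Phi (rhoJ j) ps A = 0.
  move=> j A; case: (eqVneq (Phi (rhoJ j) ps A) 0) => // HA; exfalso; apply: Hno; exists j.
  apply: (schur_tr (@IrJ j) Ip _ HA); exact: Phi_all.
pose Mj j := \sum_(x in <<J>>%G) (qF ^+ ell x)^-1 *: (\tr (rhoJ j (x^-1)%g) *: ps x).
have HM : forall j, Mj j = 0.
  move=> j; apply/matrixP => k l.
  have -> : Mj j k l = \sum_i (Phi (rhoJ j) ps (delta_mx i k)) i l.
    rewrite /Mj /Phi summxE.
    under [RHS]eq_bigr do rewrite summxE.
    rewrite exchange_big /=; apply: eq_bigr => x _.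
    rewrite !mxE /mxtrace mulr_suml mulr_sumr; apply: eq_bigr => i _.
    by rewrite mxE delta_mid mulrA.
  by rewrite mxE big1 // => i _; rewrite H0 mxE.
have Hsum : \sum_j dJ j *: Mj j = poincare <<J>>%G J *: (1%:M : 'M[HF]_m).
  rewrite /Mj.
  under eq_bigr do rewrite scaler_sumr.
  rewrite exchange_big /=.
  rewrite (bigD1 1%g) ?group1 //=.
  rewrite [X in _ + X]big1 ?addr0; last first.
    move=> x /andP[Hx Hx1].
    under eq_bigr do rewrite !scalerA.
    rewrite -scaler_suml.
    have := HdJ (groupVr Hx); rewrite invg_eq1 (negPf Hx1) => Hz.
    rewrite (eq_bigr (fun j => (qF ^+ ell x)^-1 * (\tr (rhoJ j x^-1%g) * dJ j))).
      by rewrite -mulr_sumr Hz mulr0 scale0r.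
    by move=> j _; rewrite mulrAC mulrC [dJ j * _]mulrC.
  rewrite invg1 len1 expr0 invr1.
  under eq_bigr do rewrite !scalerA.
  rewrite -scaler_suml hrep1 //.
  have := HdJ (group1 _); rewrite eqxx => <-.
  by congr (_ *: _); apply: eq_bigr => j _; rewrite mulr1 mulrC.
have : poincare <<J>>%G J *: (1%:M : 'M[HF]_m) = 0.
  by rewrite -Hsum big1 // => j _; rewrite HM scaler0.
move/matrixP/(_ (Ordinal Hm) (Ordinal Hm)); rewrite !mxE eqxx mulr1 => /eqP.
by rewrite (negPf PJ0).
Qed.

Lemma ex_minP (Q : nat -> Prop) : (exists k, Q k) -> exists k, Q k /\ forall k', Q k' -> (k <= k')%N.
Proof.
move=> [k Hk]; have [N HN] := ubnP k; elim: N k HN Hk => // N IH k HN Qk.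
case: (classic (exists k', Q k' /\ (k' < k)%N)) => [[k' [Qk' Hlt]]|Hno].
  by apply: (IH k') => //; apply: leq_trans Hlt _; rewrite -ltnS.
exists k; split=> // k' Qk'; rewrite leqNgt; apply/negP => Hlt; apply: Hno; by exists k'.
Qed.

Lemma decomp n (sg : gT -> 'M[HF]_n) : hrep sg ->
  exists mu : Iirr <<J>>%G -> nat, forall y, y \in <<J>>%g ->
    \tr (sg y) = \sum_j (mu j)%:R * \tr (rhoJ j y).
Proof.
have [N HN] := ubnP n; elim: N n HN sg => // N IH n Hn sg Hsg.
case: n Hn sg Hsg => [|n'] Hn sg Hsg.
  exists (fun _ => 0%N) => y _; rewrite /mxtrace big_ord0 big1 // => j _; by rewrite mul0r.
pose P (U : 'M[HF]_n'.+1) := (forall y, y \in <<J>>%g -> (U *m sg y <= U)%MS) /\ U != 0.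
have [k [[U [[HU HU0] HUk]] Hmin]] : exists k, (exists U, P U /\ \rank U = k) /\
    forall k', (exists U, P U /\ \rank U = k') -> (k <= k')%N.
  apply: ex_minP; exists n'.+1, 1%:M; split=> //; last exact: mxrank1.
  split; first by move=> y _; apply: submx1.
  by apply/eqP => /matrixP/(_ 0 0); rewrite !mxE /= => /eqP; rewrite oner_eq0.
have Hr : (0 < \rank U)%N by rewrite lt0n mxrank_eq0.
have Hsub := subrep_hrep Hsg HU.
have Hfac := factrep_hrep Hsg HU.
have Isub : irrH (subrep sg U).
  move=> V HV; apply/orP; case: (eqVneq V 0) => [->|HV0]; first by left; rewrite !sub0mx.
  right; rewrite /row_full eqn_leq rank_leq_col /=.
  have HVi : forall y, y \in <<J>>%g -> (val_submod V *m sg y <= val_submod V)%MS.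
    by move=> y Hy; rewrite -val_submod_mul ?HU // val_submodS HV.
  have PV : P <<val_submod V>>%MS.
    split.
      by move=> y Hy; rewrite (eqmxMr _ (genmxE _)) genmxE HVi.
    by rewrite -mxrank_eq0 genmxE mxrank_eq0 val_submod_eq0.
  have := Hmin _ (ex_intro _ _ (conj PV erefl)).
  by rewrite genmxE -HUk /val_submod /= mxrankMfree // row_base_free.
have [j0 Hj0] := complete Hsub Isub Hr.
have Hq : (\rank (cokermx U) < N)%N.
  by rewrite mxrank_coker; move: Hn Hr; clear; lia.
have [muQ HmuQ] := IH _ Hq _ Hfac.
exists (fun j => muQ j + (j == j0))%N => y Hy.
rewrite (tr_subfact sg U y) Hj0 // HmuQ // addrC.
under [RHS]eq_bigr do rewrite natrD mulrDl.
rewrite big_split /=; congr (_ + _).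
rewrite (bigD1 j0) //= eqxx mul1r big1 ?addr0 // => j Hj.
by rewrite (negPf Hj) mul0r.
Qed.
End Family. End Hecke.

Section Indep.
Variable gT : finGroupType.
Variable G : {group gT}.
Variables (rk : Iirr G -> nat) (rh : forall j, gT -> 'M[HF]_(rk j)).
Hypothesis Haff : forall j, hecke_affords G (rh j) 'chi[G]_j.

Lemma indep (c : Iirr G -> HF) :
  (forall x, x \in G -> \sum_j c j * \tr (rh j x) = 0) -> forall j, c j = 0.
Proof.
move=> Hc.
have exP : forall j x, exists p : {poly algC},
    (x \in G) ==> ((\tr (rh j x) == tofrac p) && (p.[1] == 'chi_j x)).
  move=> j x; case Hx: (x \in G); last by exists 0.
  by have [p [H1 H2]] := @Haff j x Hx; exists p; rewrite H1 H2 !eqxx.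
pose pol j x := xchoose (exP j x).
have Hpol : forall j x, x \in G -> \tr (rh j x) = tofrac (pol j x) /\ (pol j x).[1] = 'chi_j x.
  move=> j x Hx; have := xchooseP (exP j x); rewrite -/(pol j x) => H.
  by move: (implyP H Hx) => /andP[/eqP H1 /eqP H2].
have Hrep : forall k : Iirr G, repr (irr_class k) \in G.
  by move=> k; have /repr_classesP[] := irr_classP k.
pose Pm : 'M[{poly algC}]_(Nirr G) := \matrix_(i, k) pol i (repr (irr_class k)).
have HPm : map_mx (horner_eval 1) Pm = character_table G.
  by apply/matrixP => i k; rewrite !mxE horner_evalE (proj2 (Hpol _ _ (Hrep k))).
have Hdet : \det Pm != 0.
  have := character_table_unit G; rewrite unitmxE -HPm det_map_mx unitfE.
  by apply: contraNneq => ->; rewrite rmorph0.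
pose Mt := map_mx (@tofrac _) Pm.
have HMt : Mt \in unitmx.
  by rewrite unitmxE det_map_mx unitfE tofrac_eq0.
pose cv := \row_i c i.
have Hcv : cv *m Mt = 0.
  apply/matrixP => i k; rewrite mxE [RHS]mxE -[RHS](Hc _ (Hrep k)); apply: eq_bigr => j _.
  by rewrite !mxE (proj1 (Hpol _ _ (Hrep k))).
move=> j; have := mulmxK HMt cv; rewrite Hcv mul0mx => /matrixP/(_ 0 j).
by rewrite !mxE.
Qed.

End Indep.

Lemma poincare_neq0 (gT : finGroupType) (G : {group gT}) (J : {set gT}) : poincare G J != 0.
Proof.
rewrite /poincare /qF.
have -> : \sum_(w in G) tofrac ('X^2 : {poly algC}) ^+ coxeter_length J w =
          tofrac (\sum_(w in G) ('X^2 : {poly algC}) ^+ coxeter_length J w).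
  rewrite rmorph_sum; apply: eq_bigr => w _; symmetry; apply: rmorphXn.
rewrite tofrac_eq0; apply/eqP => /(congr1 (horner^~ 1)).
rewrite horner_sum hornerC.
under eq_bigr do rewrite horner_exp hornerXn !expr1n.
rewrite sumr_const => /eqP; by rewrite pnatr_eq0 eqn0Ngt cardG_gt0.
Qed.

Lemma res_hrep (gT : finGroupType) (W : {group gT}) (S J : {set gT}) n (sg : gT -> 'M[HF]_n) :
  coxeter_system W S -> J \subset S -> hecke_rep W S sg -> hrep J sg.
Proof.
move=> HW HJS [H1 H2 H3]; split=> //.
  by move=> a Ha; apply: H2; apply: (subsetP HJS).
have HJW : (<<J>> \subset W)%g by rewrite (cox_gen HW) genS.
move=> x y Hx Hy E; apply: H3; rewrite ?(subsetP HJW) //.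
by rewrite !(len_sub HW HJS) ?groupM.
Qed.

Lemma cstF_sum I (r : seq I) (P : pred I) (F : I -> algC) :
  cstF (\sum_(i <- r | P i) F i) = \sum_(i <- r | P i) cstF (F i).
Proof. by rewrite /cstF rmorph_sum rmorph_sum. Qed.

Lemma cstF_natM (k : nat) (a : algC) : cstF (k%:R * a) = k%:R * cstF a.
Proof. by rewrite /cstF rmorphM rmorphM rmorph_nat rmorph_nat. Qed.

Unset Implicit Arguments.

Theorem proposition2p3 (gT : finGroupType) (W : {group gT}) (S J : {set gT})
  (HW : coxeter_system W S) (HJS : J \subset S)
  (rk : Iirr W -> nat) (rho : forall i : Iirr W, gT -> 'M[HF]_(rk i))
  (Hrho : forall i, hecke_irr W S (rho i) /\ hecke_affords W (rho i) 'chi[W]_i)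
  (d : Iirr W -> HF) (Hd : is_generic_degrees W S rho d)
  (rkJ : Iirr <<J>>%G -> nat) (rhoJ : forall j : Iirr <<J>>%G, gT -> 'M[HF]_(rkJ j))
  (HrhoJ : forall j, hecke_irr <<J>>%G J (rhoJ j) /\
                     hecke_affords <<J>>%G (rhoJ j) 'chi[<<J>>%G]_j)
  (dJ : Iirr <<J>>%G -> HF) (HdJ : is_generic_degrees <<J>>%G J rhoJ dJ)
  (w x : gT) (Hw : w \in W) (Hx : x \in <<J>>%G) (Hwx : w \in (x ^: W)%g) :
  gpoly W d w = poincare W S / poincare <<J>>%G J * gpoly <<J>>%G dJ x.
Proof.
have HinvJ : invols J := fun a Ha => cox_invol HW (subsetP HJS a Ha).
have Hdich : forall (y : gT) a, y \in <<J>>%g -> a \in J ->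
    coxeter_length J (y * a)%g = (coxeter_length J y).+1 \/
    coxeter_length J y = (coxeter_length J (y * a)%g).+1.
  by move=> y a Hy Ha; apply: (len_mulr HW HJS Hy Ha).
have HrJ : forall j, hrep J (rhoJ j) by move=> j; case: (HrhoJ j) => [[]].
have IrJ : forall j, irrH J (rhoJ j) by move=> j; case: (HrhoJ j) => [[]].
have PJ0 := poincare_neq0 <<J>>%G J.
have HJW : (<<J>> \subset W)%g by rewrite (cox_gen HW) genS.
have Hmu : forall i : Iirr W, exists mu : Iirr <<J>>%G -> nat, forall y, y \in <<J>>%g ->
    \tr (rho i y) = \sum_j (mu j)%:R * \tr (rhoJ j y).
  move=> i; apply: (decomp HinvJ Hdich HrJ IrJ HdJ PJ0).
  by apply: (res_hrep HW HJS); case: (Hrho i) => [[]].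
have [mu Hmu'] := fin_all_exists Hmu.
have Hspec : forall i y, y \in <<J>>%g ->
    'chi[W]_i y = \sum_j ((mu i j)%:R * 'chi[<<J>>%G]_j y).
  move=> i y Hy.
  have HyW : y \in W := subsetP HJW _ Hy.
  have [p [Hp1 Hp2]] := (proj2 (Hrho i)) y HyW.
  have Hq : forall j, exists q : {poly algC}, \tr (rhoJ j y) = tofrac q /\ q.[1] = 'chi[<<J>>%G]_j y.
    by move=> j; apply: (proj2 (HrhoJ j)).
  have [qj Hqj] := fin_all_exists Hq.
  have : p = \sum_j (mu i j)%:R * qj j.
    apply/eqP; rewrite -tofrac_eq -Hp1 Hmu' // rmorph_sum; apply/eqP/eq_bigr => j _.
    by rewrite rmorphM rmorph_nat (proj1 (Hqj j)).
  move/(congr1 (horner^~ 1)); rewrite -Hp2 => ->.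
  rewrite horner_sum; apply: eq_bigr => j _.
  by rewrite hornerM (proj2 (Hqj j)) hornerMn hornerE.
have Hcoef : forall j, \sum_i (mu i j)%:R * d i = poincare W S / poincare <<J>>%G J * dJ j.
  move=> j; apply/eqP; rewrite -subr_eq0; apply/eqP; move: j.
  apply: (indep (fun j => proj2 (HrhoJ j))) => y Hy.
  have HyW : y \in W := subsetP HJW _ Hy.
  have E1 : \sum_j (\sum_i (mu i j)%:R * d i) * \tr (rhoJ j y) =
            (if y == 1%g then poincare W S else 0).
    rewrite -(Hd y HyW).
    under eq_bigr do rewrite mulr_suml.
    rewrite exchange_big /=; apply: eq_bigr => i _.
    rewrite Hmu' // mulr_suml; apply: eq_bigr => j _.
    by rewrite mulrAC.
  have E2 : \sum_j (poincare W S / poincare <<J>>%G J * dJ j) * \tr (rhoJ j y) =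
            poincare W S / poincare <<J>>%G J * (if y == 1%g then poincare <<J>>%G J else 0).
    rewrite -(HdJ y Hy) mulr_sumr; apply: eq_bigr => j _.
    by rewrite -mulrA [dJ j * _]mulrC.
  rewrite (eq_bigr _ (fun j _ => mulrBl _ _ _)) sumrB E1 E2.
  by case: (y == 1%g); rewrite ?mulr0 ?subr0 // divfK // subrr.
rewrite /gpoly.
have [g Hg ->] := imsetP Hwx.
under eq_bigr do rewrite cfunJ // Hspec // cstF_sum mulr_suml.
rewrite exchange_big /= mulr_sumr; apply: eq_bigr => j _.
under eq_bigr do rewrite cstF_natM.
transitivity (cstF ('chi[<<J>>%G]_j x) * \sum_i (mu i j)%:R * d i).
  by rewrite mulr_sumr; apply: eq_bigr => i _; rewrite mulrAC mulrC.
by rewrite Hcoef mulrCA.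
Qed.
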